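(* Let $\lambda\in\mathbb R\cup i\mathbb R$ be a constant, $\vec H\in\Gamma(E)$, and let $\varphi\in\Gamma(\Sigma)$ solve $D\varphi=\vec H\cdot\varphi-2\lambda\varphi$ and satisfy, for all $X\in TM$, $X|\varphi^+|^2=2\,\Re e\langle \lambda X\cdot\varphi^{-},\varphi^{+}\rangle$ and $X|\varphi^-|^2=2\,\Re e\langle \lambda X\cdot\varphi^{+},\varphi^{-}\rangle$. Fix $p\in M$ at which $\varphi^{++},\varphi^{--},\varphi^{+-},\varphi^{-+}$ are all non-zero, an orthonormal basis $(e_1,e_2)$ of $T_pM$ and a unit vector $e_3\in E_p$ with $\vec H(p)=|\vec H(p)|e_3$. Define on $T_pM$ the bilinear forms $A_{++}(X,Y)=\Re e\langle\nabla_X\varphi^{++}-\lambda X\cdot\varphi^{-+},Y\cdot e_3\cdot\varphi^{--}\rangle$, $A_{--}(X,Y)=\Re e\langle\nabla_X\varphi^{--}-\lambda X\cdot\varphi^{+-},Y\cdot e_3\cdot\varphi^{++}\rangle$, $A_{+-}(X,Y)=\Re e\langle\nabla_X\varphi^{+-}-\lambda X\cdot\varphi^{--},Y\cdot e_3\cdot\varphi^{-+}\rangle$, $A_{-+}(X,Y)=\Re e\langle\nabla_X\varphi^{-+}-\lambda X\cdot\varphi^{++},Y\cdot e_3\cdot\varphi^{+-}\rangle$, and $F_+=\frac{A_{++}}{|\varphi^{--}|^2}-\frac{A_{--}}{|\varphi^{++}|^2}$, $F_-=\frac{A_{+-}}{|\varphi^{-+}|^2}-\frac{A_{-+}}{|\varphi^{+-}|^2}$,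 with associated endomorphisms $F^\pm(X)=F_\pm(X,e_1)e_1+F_\pm(X,e_2)e_2$. Then for all $X\in T_pM$: $$\Re e\langle F^+(X)\cdot e_3\cdot\varphi^{--},\varphi^{++}\rangle=0\quad\text{and}\quad \Re e\langle F^-(X)\cdot e_3\cdot\varphi^{-+},\varphi^{+-}\rangle=0.$$
   Context: Setup. $(M^2,g)$ is an oriented Riemannian surface with a fixed spin structure, and $E\to M$ is an oriented real vector bundle of rank $2$ with a metric $\langle\cdot,\cdot\rangle$, a compatible connection $\nabla^E$ and a fixed spin structure. $\Sigma M=\Sigma^+M\oplus\Sigma^-M$ and $\Sigma E=\Sigma^+E\oplus\Sigma^-E$ denote the complex spinor bundles of $M$ and $E$ with their half-spinor splittings, spinorial connections $\nabla^{\Sigma M},\nabla^{\Sigma E}$ and Clifford multiplications $\cdot_M,\cdot_E$. The twisted spinor bundle is $\Sigma=\Sigma M\otimes\Sigma E$, with connection $\nabla=\nabla^{\Sigma M}\otimes\mathrm{Id}+\mathrm{Id}\otimes\nabla^{\Sigma E}$ and Clifford multiplication by vectors of $TM\oplus E$ given on $\varphi=\alpha\otimes\sigma$ by $X\cdot\varphi=(X\cdot_M\alpha)\otimes\overline{\sigma}$ if $X\in TM$ and $X\cdot\varphi=\alpha\otimes(X\cdot_E\sigma)$ if $X\in E$, where $\overline\sigma=\sigma^+-\sigma^-$; this extends to an action of the Clifford bundle $Cl(TM\oplus E)$. $\Sigma$ carries its natural Hermitian product $\langle\cdot,\cdot\rangle$ ($\mathbb C$-linear in the first slot, antilinear in the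 second), compatible with $\nabla$, for which Clifford multiplication by vectors is skew-Hermitian; $\Re e\langle\cdot,\cdot\rangle$ is the associated real scalar product and $|\cdot|$ the norm. The Dirac operator is $D\varphi=e_1\cdot\nabla_{e_1}\varphi+e_2\cdot\nabla_{e_2}\varphi$, $(e_1,e_2)$ a local orthonormal frame of $TM$. Write $\Sigma^{\epsilon\delta}=\Sigma^\epsilon M\otimes\Sigma^\delta E$ ($\epsilon,\delta\in\{+,-\}$), decompose $\varphi=\varphi^{++}+\varphi^{--}+\varphi^{+-}+\varphi^{-+}$ accordingly, and set $\varphi^+=\varphi^{++}+\varphi^{--}$, $\varphi^-=\varphi^{+-}+\varphi^{-+}$. For $\lambda\in\mathbb C$, $\lambda X\cdot\varphi$ means complex scalar multiplication of $X\cdot\varphi$. *)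

(* Defs.v *)
(* Pointwise (fibre-at-p) model of the twisted spinor
   bundle  Sigma_p = Sigma_p M (x) Sigma_p E  over a number-closed field C
   (e.g. algC, a model of the complex numbers). *)
From HB Require Import structures.
From mathcomp Require Import all_boot all_order all_algebra.
Set Implicit Arguments. Unset Strict Implicit. Unset Printing Implicit Defensive.
Import Order.TTheory GRing.Theory Num.Theory.
Local Open Scope ring_scope.

(* A spinor in the fibre Sigma_p, written in the basis adapted to the
   splitting  Sigma^{eps delta} = Sigma^eps M (x) Sigma^delta E :
   phi eps delta is the component in Sigma^{eps delta}  (true = +, false = -). *)
Definition spinor (C : numClosedFieldType) := bool -> bool -> C.

Section Spinors.
Variable C : numClosedFieldType.
Implicit Types (phi psi : spinor C) (a b : bool) (c : C).

Definition sgnb b : C := if b then 1 else -1.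

Definition sp_add phi psi : spinor C := fun a b => phi a b + psi a b.
Definition sp_scale c phi : spinor C := fun a b => c * phi a b.
Definition sp_sub phi psi : spinor C := fun a b => phi a b - psi a b.

Definition sp_proj a0 b0 phi : spinor C :=
  fun a b => if (a == a0) && (b == b0) then phi a b else 0.
Definition sp_plus phi : spinor C := sp_add (sp_proj true true phi) (sp_proj false false phi).
Definition sp_minus phi : spinor C := sp_add (sp_proj true false phi) (sp_proj false true phi).

Definition sp_herm phi psi : C :=
  phi true true * (psi true true)^* + phi true false * (psi true false)^*
  + phi false true * (psi false true)^* + phi false false * (psi false false)^*.
Definition sp_norm2 phi : C := 'Re (sp_herm phi phi).

(* Clifford multiplication by the orthonormal frame e1, e2 of T_pM and
   e3 of E_p, in the standard representation
     e1 = [[0,i],[i,0]], e2 = [[0,1],[-1,0]] on Sigma M and on Sigma E,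
   so that Sigma^+ is the +1 eigenspace of the complex volume element i e1 e2
   (resp. i e3 e4), together with the twisting rule
     X.(alpha (x) sigma) = (X.alpha) (x) sigma_bar   for X in TM,
     X.(alpha (x) sigma) = alpha (x) (X.sigma)      for X in E. *)
Definition cl_e1 phi : spinor C := fun a b => 'i * sgnb b * phi (~~ a) b.
Definition cl_e2 phi : spinor C := fun a b => sgnb a * sgnb b * phi (~~ a) b.
Definition cl_e3 phi : spinor C := fun a b => 'i * phi a (~~ b).

(* Clifford multiplication by the tangent vector X = x1 e1 + x2 e2 (x1, x2 real) *)
Definition cl_TM (x1 x2 : C) phi : spinor C :=
  sp_add (sp_scale x1 (cl_e1 phi)) (sp_scale x2 (cl_e2 phi)).

(* nabla_X phi at p for X = x1 e1 + x2 e2, where psi1 = nabla_{e1} phi (p),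
   psi2 = nabla_{e2} phi (p) *)
Definition nablaX (x1 x2 : C) (psi1 psi2 : spinor C) : spinor C :=
  sp_add (sp_scale x1 psi1) (sp_scale x2 psi2).

Definition dirac_at (psi1 psi2 : spinor C) : spinor C :=
  sp_add (cl_e1 psi1) (cl_e2 psi2).

(* Here nabla_X (phi^{ab}) = (nabla_X phi)^{ab} since nabla preserves the splitting. *)
Definition Aform (lam : C) (phi psi1 psi2 : spinor C)
    (a b a' b' a'' b'' : bool) (x1 x2 y1 y2 : C) : C :=
  'Re (sp_herm
         (sp_sub (sp_proj a b (nablaX x1 x2 psi1 psi2))
                 (sp_scale lam (cl_TM x1 x2 (sp_proj a' b' phi))))
         (cl_TM y1 y2 (cl_e3 (sp_proj a'' b'' phi)))).

Definition A_pp lam phi psi1 psi2 := Aform lam phi psi1 psi2 true true false true false false.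
Definition A_mm lam phi psi1 psi2 := Aform lam phi psi1 psi2 false false true false true true.
Definition A_pm lam phi psi1 psi2 := Aform lam phi psi1 psi2 true false false false false true.
Definition A_mp lam phi psi1 psi2 := Aform lam phi psi1 psi2 false true true true true false.

Definition F_plus lam phi psi1 psi2 (x1 x2 y1 y2 : C) : C :=
  A_pp lam phi psi1 psi2 x1 x2 y1 y2 / sp_norm2 (sp_proj false false phi)
  - A_mm lam phi psi1 psi2 x1 x2 y1 y2 / sp_norm2 (sp_proj true true phi).
Definition F_minus lam phi psi1 psi2 (x1 x2 y1 y2 : C) : C :=
  A_pm lam phi psi1 psi2 x1 x2 y1 y2 / sp_norm2 (sp_proj false true phi)
  - A_mp lam phi psi1 psi2 x1 x2 y1 y2 / sp_norm2 (sp_proj true false phi).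

Definition Fend_plus lam phi psi1 psi2 (x1 x2 : C) : C * C :=
  (F_plus lam phi psi1 psi2 x1 x2 1 0, F_plus lam phi psi1 psi2 x1 x2 0 1).
Definition Fend_minus lam phi psi1 psi2 (x1 x2 : C) : C * C :=
  (F_minus lam phi psi1 psi2 x1 x2 1 0, F_minus lam phi psi1 psi2 x1 x2 0 1).

End Spinors.

(* Main.v *)
Require Import Defs.
From HB Require Import structures.
From mathcomp Require Import all_boot all_order all_algebra.
From mathcomp Require Import ring.
Import Order.TTheory GRing.Theory Num.Theory.
Local Open Scope ring_scope.

Section CJ.
Variable C : numClosedFieldType.
Implicit Types x y : C.
Lemma cjD x y : (x + y)^* = x^* + y^*. Proof. exact: rmorphD. Qed.
Lemma cjB x y : (x - y)^* = x^* - y^*. Proof. exact: rmorphB. Qed.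
Lemma cjN x : (- x)^* = - x^*. Proof. exact: rmorphN. Qed.
Lemma cjM x y : (x * y)^* = x^* * y^*. Proof. exact: rmorphM. Qed.
Lemma cjV x : (x^-1)^* = (x^*)^-1. Proof. exact: fmorphV. Qed.
Lemma cj1 : (1:C)^* = 1. Proof. exact: rmorph1. Qed.
Lemma cj2 : (2:C)^* = 2. Proof. exact: rmorph_nat. Qed.
End CJ.

Lemma key1 (C : numClosedFieldType) (lam : C)
    (phi psi1 psi2 : spinor C) x1 x2 :
  phi true true != 0 -> phi false false != 0 ->
  x1 \is Num.real -> x2 \is Num.real ->
    'Re (sp_herm (cl_TM (Fend_plus lam phi psi1 psi2 x1 x2).1
                        (Fend_plus lam phi psi1 psi2 x1 x2).2
                        (cl_e3 (sp_proj false false phi)))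
                 (sp_proj true true phi))
  = 'Re (sp_herm (sp_plus (nablaX x1 x2 psi1 psi2)) (sp_plus phi))
     - 'Re (sp_herm (sp_scale lam (cl_TM x1 x2 (sp_minus phi))) (sp_plus phi)).
Proof.
move=> h1 h2 r1 r2.
rewrite /sp_plus /sp_minus /Fend_plus /F_plus /A_pp /A_mm /Aform /sp_norm2 /sp_herm /cl_TM /nablaX
  /sp_sub /sp_add /sp_scale /sp_proj /cl_e1 /cl_e2 /cl_e3 /sgnb /=.
rewrite ?(mul0r,mulr0,mul1r,mulr1,add0r,addr0,sub0r,subr0,oppr0,rmorph0).
rewrite !ReE.
rewrite ?(cjD, cjB, cjN, cjM, cjV, conjCK, conjCi, cj1, cj2).
rewrite !(conj_Creal r1) !(conj_Creal r2).
set a := phi true true. set b := phi false false.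
have hu1 : a * a^* + a^* * a != 0.
  by rewrite mulrC -mulr2n mulrn_eq0 negb_or mulf_neq0 // conjC_eq0.
have hu2 : b * b^* + b^* * b != 0.
  by rewrite mulrC -mulr2n mulrn_eq0 negb_or mulf_neq0 // conjC_eq0.
field: (mulCii C).
apply/andP; split; [move: hu1 | move: hu2]; by rewrite addrC.
Qed.

Lemma key2 (C : numClosedFieldType) (lam : C)
    (phi psi1 psi2 : spinor C) x1 x2 :
  phi true false != 0 -> phi false true != 0 ->
  x1 \is Num.real -> x2 \is Num.real ->
    'Re (sp_herm (cl_TM (Fend_minus lam phi psi1 psi2 x1 x2).1
                        (Fend_minus lam phi psi1 psi2 x1 x2).2
                        (cl_e3 (sp_proj false true phi)))
                 (sp_proj true false phi))
  = 'Re (sp_herm (sp_minus (nablaX x1 x2 psi1 psi2)) (sp_minus phi))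
     - 'Re (sp_herm (sp_scale lam (cl_TM x1 x2 (sp_plus phi))) (sp_minus phi)).
Proof.
move=> h1 h2 r1 r2.
rewrite /sp_plus /sp_minus /Fend_minus /F_minus /A_pm /A_mp /Aform /sp_norm2 /sp_herm /cl_TM /nablaX
  /sp_sub /sp_add /sp_scale /sp_proj /cl_e1 /cl_e2 /cl_e3 /sgnb /=.
rewrite ?(mul0r,mulr0,mul1r,mulr1,add0r,addr0,sub0r,subr0,oppr0,rmorph0).
rewrite !ReE.
rewrite ?(cjD, cjB, cjN, cjM, cjV, conjCK, conjCi, cj1, cj2).
rewrite !(conj_Creal r1) !(conj_Creal r2).
set a := phi true false. set b := phi false true.
have hu1 : a * a^* + a^* * a != 0.
  by rewrite mulrC -mulr2n mulrn_eq0 negb_or mulf_neq0 // conjC_eq0.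
have hu2 : b * b^* + b^* * b != 0.
  by rewrite mulrC -mulr2n mulrn_eq0 negb_or mulf_neq0 // conjC_eq0.
field: (mulCii C).
apply/andP; split; [move: hu1 | move: hu2]; by rewrite addrC.
Qed.

Theorem mainTheorem8 (C : numClosedFieldType) (lam h : C)
    (phi psi1 psi2 : spinor C) :
  (* lambda in R \cup iR *)
  (lam \is Num.real \/ exists r : C, r \is Num.real /\ lam = 'i * r) ->
  (* H(p) = |H(p)| e3 *)
  0 <= h ->
  (* phi^{++}, phi^{--}, phi^{+-}, phi^{-+} non-zero at p *)
  phi true true != 0 -> phi false false != 0 ->
  phi true false != 0 -> phi false true != 0 ->
  (* D phi = H . phi - 2 lam phi  at p *)
  dirac_at psi1 psi2
    = sp_sub (sp_scale h (cl_e3 phi)) (sp_scale (2 * lam) phi) ->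
  (* X|phi^+|^2 = 2 Re<lam X.phi^-, phi^+>, with X|phi^+|^2 = 2 Re<nabla_X phi^+, phi^+> *)
  (forall x1 x2 : C, x1 \is Num.real -> x2 \is Num.real ->
     2 * 'Re (sp_herm (sp_plus (nablaX x1 x2 psi1 psi2)) (sp_plus phi))
     = 2 * 'Re (sp_herm (sp_scale lam (cl_TM x1 x2 (sp_minus phi))) (sp_plus phi))) ->
  (* X|phi^-|^2 = 2 Re<lam X.phi^+, phi^->, with X|phi^-|^2 = 2 Re<nabla_X phi^-, phi^-> *)
  (forall x1 x2 : C, x1 \is Num.real -> x2 \is Num.real ->
     2 * 'Re (sp_herm (sp_minus (nablaX x1 x2 psi1 psi2)) (sp_minus phi))
     = 2 * 'Re (sp_herm (sp_scale lam (cl_TM x1 x2 (sp_plus phi))) (sp_minus phi))) ->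
  forall x1 x2 : C, x1 \is Num.real -> x2 \is Num.real ->
    'Re (sp_herm (cl_TM (Fend_plus lam phi psi1 psi2 x1 x2).1
                        (Fend_plus lam phi psi1 psi2 x1 x2).2
                        (cl_e3 (sp_proj false false phi)))
                 (sp_proj true true phi)) = 0
 /\ 'Re (sp_herm (cl_TM (Fend_minus lam phi psi1 psi2 x1 x2).1
                        (Fend_minus lam phi psi1 psi2 x1 x2).2
                        (cl_e3 (sp_proj false true phi)))
                 (sp_proj true false phi)) = 0.
Proof.
move=> _ _ h1 h2 h3 h4 _ Hp Hm x1 x2 r1 r2.
have two : (2:C) != 0 by rewrite pnatr_eq0.
split.
  rewrite key1 //; apply/eqP; rewrite subr_eq0; apply/eqP; exact: (mulfI two (Hp x1 x2 r1 r2)).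
rewrite key2 //; apply/eqP; rewrite subr_eq0; apply/eqP; exact: (mulfI two (Hm x1 x2 r1 r2)).
Qed.
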